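(* Let $A_n=1$ if $n=2^{k+1}-2$ for some integer $k\ge0$ and $A_n=0$ otherwise, and let $D(n)=\det\left(A_{i+j}\right)_{i,j=0}^{n-1}$ for $n\ge1$, $D(0)=1$. Let $k>0$. Then $$D(2^{k+1}+n)=-D(n)\quad\text{for }0\le n<2^k,\qquad D(2^{k+1}+n)=D(n)\quad\text{for }2^k\le n<2^{k+1}.$$ *)

(* Defs.v *)
From mathcomp Require Import all_boot all_order all_algebra.
Set Implicit Arguments. Unset Strict Implicit. Unset Printing Implicit Defensive.
Import GRing.Theory Num.Theory.
Local Open Scope ring_scope.

(* A_n = 1 if n = 2^(k+1) - 2 for some integer k >= 0, else 0.
   Any such k satisfies k <= n (since 2^(k+1) - 2 >= k), so the search
   over k < n+1 is exhaustive; this makes the predicate boolean. *)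
Definition isA (n : nat) : bool := [exists k : 'I_n.+1, n == (2 ^ k.+1 - 2)%N].
Definition A (n : nat) : int := if isA n then 1 else 0.

Definition D (n : nat) : int := \det (\matrix_(i < n, j < n) A (i + j)%N).

(* Main.v *)
Require Import Defs.
From mathcomp Require Import all_boot all_order all_algebra.
From mathcomp Require Import zify.
Local Open Scope ring_scope.
Import GRing.Theory.

Lemma exp_del2 (R : comNzRingType) m (M : 'M[R]_(m.+2)) (q : 'I_m.+1) :
  (forall j, M ord_max j = (j == lift ord_max q)%:R) ->
  (forall i, M i ord_max = (i == lift ord_max q)%:R) ->
  \det M = - \det (\matrix_(i, j) M (lift ord_max (lift q i)) (lift ord_max (lift q j))).
Proof.
move=> hrow hcol.
rewrite (expand_det_row _ ord_max) (bigD1 (lift ord_max q)) //= big1 ?addr0; last first.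
  by move=> j /negbTE hj; rewrite hrow hj mul0r.
rewrite hrow eqxx mul1r /cofactor.
rewrite (expand_det_col _ ord_max) (bigD1 q) //= big1 ?addr0; last first.
  move=> i /negbTE hi; rewrite !mxE.
  have -> : lift (lift ord_max q) ord_max = ord_max :> 'I_m.+2.
    apply: val_inj; have hq := ltn_ord q; rewrite /= /bump.
    have -> : (m < q)%N = false by lia.
    by rewrite add0n -ltnS hq.
  by rewrite hcol (inj_eq lift_inj) hi mul0r.
rewrite !mxE.
have -> : lift (lift ord_max q) ord_max = ord_max :> 'I_m.+2.
  apply: val_inj; have hq := ltn_ord q; rewrite /= /bump.
  have -> : (m < q)%N = false by lia.
  by rewrite add0n -ltnS hq.
rewrite hcol eqxx mul1r /cofactor mulrA -exprD -signr_odd.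
have hb : bump m.+1 q = q.
  by rewrite /bump; have hq := ltn_ord q; have -> : (m.+1 <= q)%N = false by lia.
rewrite hb.
have -> : odd (m.+1 + q + (q + @ord_max m)) = true.
  have -> : (m.+1 + q + (q + @ord_max m) = (m + q).*2.+1)%N by rewrite -!addnn /=; lia.
  by rewrite /= odd_double.
rewrite expr1 mulN1r; congr (- _); congr (\det _).
apply/matrixP => i j; rewrite !mxE; congr (M _ _).
apply: val_inj; rewrite /= /bump.
have hq := ltn_ord q; have hj := ltn_ord j.
have -> : (m < q)%N = false by lia.
have -> : (m <= j)%N = false by lia.
case: (leqP q j) => h /=; rewrite ?add0n ?add1n; [have -> : (m < j.+1)%N = false by move: hj => /= hj; lia | have -> : (m < j)%N = false by move: hj => /= hj; lia]; by [].
Qed.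

Lemma exp_last (R : comNzRingType) m (M : 'M[R]_(m.+1)) :
  (forall j, M ord_max j = (j == ord_max)%:R) ->
  \det M = \det (\matrix_(i, j) M (lift ord_max i) (lift ord_max j)).
Proof.
move=> hrow.
rewrite (expand_det_row _ ord_max) (bigD1 ord_max) //= big1 ?addr0; last first.
  by move=> j /negbTE hj; rewrite hrow hj mul0r.
rewrite hrow eqxx mul1r /cofactor -signr_odd addnn odd_double expr0 mul1r.
by congr (\det _); apply/matrixP => i j; rewrite !mxE.
Qed.

Definition Hf m (f : nat -> nat) : int := \det (\matrix_(i < m, j < m) A (f i + f j)).

Lemma Hf_ext m f g : (forall i, (i < m)%N -> f i = g i) -> Hf m f = Hf m g.
Proof.
move=> h; rewrite /Hf; congr (\det _); apply/matrixP => i j; rewrite !mxE.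
by rewrite !h.
Qed.

Lemma bump_small h k : (k < h)%N -> bump h k = k.
Proof. by rewrite /bump => hk; have -> : (h <= k)%N = false by lia. Qed.

Lemma bump_lt q m (i : 'I_m) : (q <= m)%N -> (bump q i < m.+1)%N.
Proof. by have := ltn_ord i; rewrite /bump; case: (leqP q i) => /=; lia. Qed.

Lemma Hf_step m f q : (q < m.+1)%N ->
  (forall j, (j < m.+2)%N -> A (f m.+1 + f j) = (j == q)%:R) ->
  Hf m.+2 f = - Hf m (fun i => f (bump q i)).
Proof.
move=> hq h; rewrite /Hf (@exp_del2 _ _ _ (Ordinal hq)).
- congr (- \det _); apply/matrixP => i j; rewrite !mxE /=.
  rewrite (@bump_small m.+1 (bump q i)) ?(@bump_small m.+1 (bump q j)) // ; apply: (@bump_lt q m); lia.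
- move=> j; rewrite mxE /= h //.
  by rewrite -val_eqE /= bump_small.
- move=> i; rewrite mxE /= addnC h //.
  by rewrite -val_eqE /= bump_small.
Qed.

Lemma Hf_last m f :
  (forall j, (j < m.+1)%N -> A (f m + f j) = (j == m)%:R) ->
  Hf m.+1 f = Hf m f.
Proof.
move=> h; rewrite /Hf exp_last.
- by congr (\det _); apply/matrixP => i j; rewrite !mxE /= !bump_small.
- by move=> j; rewrite mxE /= h.
Qed.

Lemma isAP x : reflect (exists i, x = (2 ^ i.+1 - 2)%N) (isA x).
Proof.
apply: (iffP existsP).
  by case=> i /eqP ->; exists i.
case=> i ->.
have hi : (i < 2 ^ i)%N by apply: ltn_expl.
have hi2 : (2 ^ i.+1 = 2 * 2 ^ i)%N by rewrite expnS.
have hlt : (i < (2 ^ i.+1 - 2).+1)%N by lia.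
by exists (Ordinal hlt).
Qed.

Lemma A_window j x : ((2 ^ j.+1).-1 <= x)%N -> (x < 2 ^ j.+3 - 2)%N ->
  A x = (x == 2 ^ j.+2 - 2)%N%:R.
Proof.
move=> h1 h2; rewrite /A.
have e2 : (2 ^ j.+2 = 2 * 2 ^ j.+1)%N by rewrite expnS.
have e3 : (2 ^ j.+3 = 2 * 2 ^ j.+2)%N by rewrite expnS.
have p1 : (0 < 2 ^ j.+1)%N by rewrite expn_gt0.
case: isAP => [[i hi]|hn].
  have p2 : (0 < 2 ^ i)%N by rewrite expn_gt0.
  have ei : (2 ^ i.+1 = 2 * 2 ^ i)%N by rewrite expnS.
  have a1 : (2 ^ j.+1 < 2 ^ i.+1)%N by lia.
  have a2 : (2 ^ i.+1 < 2 ^ j.+3)%N by lia.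
  rewrite ltn_exp2l // in a1; rewrite ltn_exp2l // in a2.
  have ei2 : i = j.+1 by lia.
  by rewrite hi ei2 eqxx.
case: eqP => // hx; exfalso; apply: hn; exists j.+1; exact hx.
Qed.

Definition gg (a N l i : nat) : nat := if (i < a)%N then i else (i - a + (N - 1 - l))%N.

Lemma chain j n l : (n < 2 ^ j.+1)%N -> (l <= n)%N ->
  Hf ((2 ^ j.+1 - 1 - n) + 2 * l + 1) (gg (2 ^ j.+1 - 1 - n) (2 ^ j.+1) l)
  = (-1) ^+ l * Hf ((2 ^ j.+1 - 1 - n) + 1) (gg (2 ^ j.+1 - 1 - n) (2 ^ j.+1) 0).
Proof.
move=> hn.
have e2 : (2 ^ j.+2 = 2 * 2 ^ j.+1)%N by rewrite expnS.
have e3 : (2 ^ j.+3 = 2 * 2 ^ j.+2)%N by rewrite expnS.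
have p1 : (0 < 2 ^ j.+1)%N by rewrite expn_gt0.
move: e2 e3 p1 hn; rewrite /gg.
set N := (2 ^ j.+1)%N; set a := (N - 1 - n)%N => e2 e3 p1 hn.
elim: l => [|l IH] hl; first by rewrite expr0 mul1r muln0 addn0.
have -> : (a + 2 * l.+1 + 1 = (a + 2 * l + 1).+2)%N by lia.
rewrite (@Hf_step _ _ a); last 2 first.
- lia.
- move=> i hi; rewrite (@A_window j) -/N ?e3 ?e2;
    case: (ltnP (a + 2 * l + 1).+1 a) => h0 /=; case: (ltnP i a) => h1 /=;
    try (congr (_ %:R); congr nat_of_bool; apply/eqP/eqP; lia); lia.
rewrite (@Hf_ext _ _ (fun i => if (i < a)%N then i else (i - a + (N - 1 - l))%N)); last first.
  move=> i hi; rewrite /bump; case: (ltnP i a) => h1 /=.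
    by rewrite add0n h1.
  rewrite add1n; have -> : (i.+1 < a)%N = false by lia.
  lia.
by rewrite IH ?(ltnW hl) // exprS mulN1r mulNr.
Qed.

Lemma reflect_D j n : (n < 2 ^ j.+1)%N ->
  D (2 ^ j.+1 + n) = (-1) ^+ n * D (2 ^ j.+1 - 1 - n).
Proof.
move=> hn.
have e2 : (2 ^ j.+2 = 2 * 2 ^ j.+1)%N by rewrite expnS.
have e3 : (2 ^ j.+3 = 2 * 2 ^ j.+2)%N by rewrite expnS.
have p1 : (0 < 2 ^ j.+1)%N by rewrite expn_gt0.
have hc := @chain j n n hn (leqnn n).
move: e2 e3 p1 hn hc; rewrite /gg.
set N := (2 ^ j.+1)%N; set a := (N - 1 - n)%N => e2 e3 p1 hn hc.
rewrite /D -[\det _]/(Hf (N + n) id) -[\det _]/(Hf a id).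
have -> : (N + n = a + 2 * n + 1)%N by rewrite /a; lia.
rewrite (@Hf_ext _ id (fun i => if (i < a)%N then i else (i - a + (N - 1 - n))%N)); last first.
  by move=> i hi; case: ifP => h //; rewrite /a; lia.
rewrite hc; congr (_ * _).
rewrite addn1 Hf_last; last first.
  move=> i hi; rewrite (@A_window j) -/N ?e3 ?e2 ?ltnn /=;
    case: (ltnP i a) => h1 /=;
    try (congr (_ %:R); congr nat_of_bool; apply/eqP/eqP; lia); lia.
by apply: Hf_ext => i hi; rewrite hi.
Qed.

Arguments reflect_D {j n}.

Theorem corollary2p3 (k : nat) (hk : (0 < k)%N) :
  (forall n : nat, (n < 2 ^ k)%N -> D (2 ^ k.+1 + n) = - D n) /\
  (forall n : nat, (2 ^ k <= n < 2 ^ k.+1)%N -> D (2 ^ k.+1 + n) = D n).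
Proof.
case: k hk => // j _.
have e2 : (2 ^ j.+2 = 2 * 2 ^ j.+1)%N by rewrite expnS.
have p1 : (0 < 2 ^ j)%N by rewrite expn_gt0.
have e1 : (2 ^ j.+1 = 2 * 2 ^ j)%N by rewrite expnS.
split.
- move=> n hn.
  have hn2 : (n < 2 ^ j.+2)%N by lia.
  rewrite (reflect_D hn2).
  have hm : (2 ^ j.+1 - 1 - n < 2 ^ j.+1)%N by lia.
  have -> : (2 ^ j.+2 - 1 - n = 2 ^ j.+1 + (2 ^ j.+1 - 1 - n))%N by lia.
  rewrite (reflect_D hm).
  have -> : (2 ^ j.+1 - 1 - (2 ^ j.+1 - 1 - n) = n)%N by lia.
  rewrite mulrA -exprD -signr_odd.
  have -> : (n + (2 ^ j.+1 - 1 - n) = (2 ^ j - 1).*2.+1)%N by rewrite -addnn; lia.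
  by rewrite /= odd_double expr1 mulN1r.
- move=> n /andP [h1 h2].
  rewrite (reflect_D h2).
  have hm : (n - 2 ^ j.+1 < 2 ^ j.+1)%N by lia.
  have := reflect_D hm.
  have -> : (2 ^ j.+1 + (n - 2 ^ j.+1) = n)%N by lia.
  have -> : (2 ^ j.+1 - 1 - (n - 2 ^ j.+1) = 2 ^ j.+2 - 1 - n)%N by lia.
  move=> ->; congr (_ * _).
  rewrite -signr_odd -[in RHS]signr_odd.
  have -> : n = ((n - 2 ^ j.+1) + (2 ^ j).*2)%N by rewrite -addnn; lia.
  by rewrite oddD odd_double addbF; congr (_ ^+ (odd _)); rewrite -addnn; lia.
Qed.
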